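(* Let $M\in\mathbb{R}^{m\times k}$ and let $P\in\mathbb{R}^{k\times k}$ be a projector along $\ker M$. Let $r:\mathbb{R}^n\to\mathbb{R}^k$ be continuous. Then there is a continuous function $g:\mathbb{R}^n\to\mathbb{R}^k$ such that for all $z\in\mathbb{R}^k$ and $y\in\mathbb{R}^n$: $M^\top Mz+P^\top r(y)=0$ if and only if $Pz=g(y)$.
   Context: A projector along $\ker M$ is a matrix $P$ with $P^2=P$ and $\ker P=\ker M$. *)

(* Defs.v *)
From HB Require Import structures.
From mathcomp Require Import all_boot all_order all_algebra.
From mathcomp Require Import all_classical all_reals all_analysis.
Set Implicit Arguments. Unset Strict Implicit. Unset Printing Implicit Defensive.
Import Order.TTheory GRing.Theory Num.Theory.
Local Open Scope ring_scope.

Definition projector_along_ker (R : ringType) (m k : nat)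
  (M : 'M[R]_(m, k)) (P : 'M[R]_k) : Prop :=
  P *m P = P /\ (forall z : 'cV[R]_k, P *m z = 0 <-> M *m z = 0).

(* Main.v *)
Require Import Defs.
From HB Require Import structures.
From mathcomp Require Import all_boot all_order all_algebra.
From mathcomp Require Import all_classical all_reals all_analysis.
Import Order.TTheory GRing.Theory Num.Theory.
Import numFieldTopology.Exports numFieldNormedType.Exports.
Local Open Scope ring_scope.

Lemma col_mul (R : pzRingType) (p q k : nat) (j : 'I_k) (A : 'M[R]_(p, q)) (X : 'M[R]_(q, k)) :
  col j (A *m X) = A *m col j X.
Proof. by rewrite !colE mulmxA. Qed.

Lemma colwise0 (R : pzRingType) (p q k : nat) (A : 'M[R]_(p, q)) (X : 'M[R]_(q, k)) :
  (forall j, A *m col j X = 0) -> A *m X = 0.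
Proof.
move=> H; apply/matrixP => i j.
have := congr1 (fun (B : 'M[R]_(p,1)) => B i 0) (H j).
by rewrite -col_mul !mxE.
Qed.

Lemma MtM_ker (R : realType) (m k : nat) (M : 'M[R]_(m, k)) (z : 'cV[R]_k) :
  (M^T *m M) *m z = 0 -> M *m z = 0.
Proof.
move=> H.
have E : (M *m z)^T *m (M *m z) = 0.
  by rewrite trmx_mul -mulmxA (mulmxA M^T) H mulmx0.
have E0 : (((M *m z)^T *m (M *m z)) 0 0) = 0 by rewrite E mxE.
rewrite mxE in E0.
have : forall i, true -> (M *m z)^T 0 i * (M *m z) i 0 = 0.
  apply/psumr_eq0P => // i _; rewrite mxE -expr2; exact: sqr_ge0.
move=> Hi; apply/matrixP => i j; rewrite (ord1 j) [RHS]mxE.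
have := Hi i isT; rewrite mxE -expr2 => /eqP; rewrite sqrf_eq0 => /eqP ->.
by [].
Qed.

Lemma lin_cont (R : realType) (n k : nat) (L : 'M[R]_k) (r : 'cV[R]_n -> 'cV[R]_k) :
  continuous r -> continuous (fun y => L *m r y).
Proof.
move=> rc.
have E : (fun y => L *m r y) = (fun y => \sum_(j < k) (r y j 0 *: col j L)).
  apply/funext => y; apply/matrixP => i c; rewrite (ord1 c) !mxE summxE.
  by apply: eq_bigr => j _; rewrite !mxE mulrC.
rewrite E.
have ac : continuous (fun x : 'cV[R]_k * 'cV[R]_k => x.1 + x.2) by exact: add_continuous.
apply: (@continuous_big 'cV[R]_k 'I_k +%R 0 (fun _ => true) ac 'cV[R]_n).
move=> j _ x.
have sc : continuous (fun y : 'cV[R]_n => r y j 0).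
  move=> y; apply: (@continuous_comp _ _ _ r (fun M : 'cV[R]_k => M j 0)); first exact: rc.
  exact: coord_continuous.
exact: (@continuousZr_tmp R 'cV[R]_k 'cV[R]_n _ (col j L) x (sc x)).
Qed.

Theorem corollary1 (R : realType) (m k n : nat)
  (M : 'M[R]_(m, k)) (P : 'M[R]_k) (r : 'cV[R]_n -> 'cV[R]_k) :
  projector_along_ker M P ->
  continuous r ->
  exists g : 'cV[R]_n -> 'cV[R]_k,
    continuous g /\
    (forall (z : 'cV[R]_k) (y : 'cV[R]_n),
        (M^T *m M) *m z + P^T *m r y = 0 <-> P *m z = g y).
Proof.
move=> [PP Pker] rc.
set A := M^T *m M.
have Asym : A^T = A by rewrite /A trmx_mul trmxK.
have kerA : forall z : 'cV[R]_k, A *m z = 0 <-> P *m z = 0.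
  move=> z; split; first by move/MtM_ker/Pker.
  by move/Pker => H; rewrite /A -mulmxA H mulmx0.
have PA : (P <= A)%MS.
  rewrite submxE; apply/eqP/colwise0 => j.
  apply/kerA; rewrite -col_mul mulmx_coker; apply/matrixP => i c; by rewrite !mxE.
have AP : A *m P = A.
  have : A *m (1%:M - P) = 0.
    apply: colwise0 => j; apply/kerA.
    by rewrite -col_mul mulmxBr mulmx1 PP subrr; apply/matrixP => i c; rewrite !mxE.
  by rewrite mulmxBr mulmx1 => /eqP; rewrite subr_eq0 => /eqP.
case/submxP: PA => D PDA.
have PtA : P^T = A *m D^T by rewrite PDA trmx_mul Asym.
set L := - (P *m D^T).
exists (fun y => L *m r y); split; first exact: lin_cont.
move=> z y.
have ALv : A *m (L *m r y) = - (P^T *m r y).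
  by rewrite /L mulNmx mulmxN mulmxA mulmxA AP PtA.
have PL : P *m (L *m r y) = L *m r y.
  by rewrite /L mulNmx mulmxN !mulmxA PP.
split.
- move=> H.
  have H1 : A *m (P *m z - L *m r y) = 0.
    by rewrite mulmxBr (mulmxA A P) AP ALv opprK.
  have H2 := (proj1 (kerA _)) H1.
  rewrite mulmxBr (mulmxA P P) PP PL in H2.
  by apply/eqP; rewrite -subr_eq0; apply/eqP.
- move=> H.
  by rewrite -AP -mulmxA H ALv addNr.
Qed.
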